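(* For $d=4$ the set $A(\sigma_\bullet,(2,0))$ is connected, and for $d=5$ the set $A(\sigma_\bullet,(2,1))$ is connected.
   Context: Identify a monic real polynomial $Q_d=x^d+\sum_{j=0}^{d-1}a_jx^j$ with its coefficient vector $(a_{d-1},\ldots,a_0)\in\mathbb{R}^d$. $\sigma_\bullet=(+,-,+,+,\ldots,+,+,-,+)$ denotes the sign pattern of length $d+1$ in which the coefficients of $x^{d-1}$ and $x^1$ are negative and all other coefficients are positive; for $d=4$ it is $(+,-,+,-,+)$ and for $d=5$ it is $(+,-,+,+,-,+)$. $A(\sigma_\bullet,(2,d-4))$ is the set of monic degree-$d$ polynomials with all coefficients non-zero with signs given by $\sigma_\bullet$ (i.e. $\operatorname{sign}(a_j)$ equals the entry of $\sigma_\bullet$ corresponding to $x^j$), having exactly two positive and exactly $d-4$ negative roots, all real roots simple, and exactly one pair of complex conjugate non-real roots. *)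

(* Defs.v *)
From HB Require Import structures.
From mathcomp Require Import all_boot all_order all_algebra.
From mathcomp Require Import all_classical all_reals all_analysis.
From mathcomp Require Import matrix_topology matrix_normedtype.
From mathcomp Require Import complex.
Import numFieldTopology.Exports.
Set Implicit Arguments.
Unset Strict Implicit.
Unset Printing Implicit Defensive.
Import Order.TTheory GRing.Theory Num.Theory.
Local Open Scope ring_scope.
Local Open Scope classical_set_scope.

(* A coefficient vector a : 'rV[R]_d is read as (a_{d-1}, ..., a_0):
   entry number i (0-based) of the row is a_{d-1-i}. *)
Definition coefj (R : realType) (d : nat) (a : 'rV[R]_d) (j : 'I_d) : R :=
  a ord0 (rev_ord j).

Definition Qpoly (R : realType) (d : nat) (a : 'rV[R]_d) : {poly R} :=
  'X^d + \sum_(j < d) (coefj a j)%:P * 'X^j.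

(* sign pattern sigma_bullet: the coefficients of x^{d-1} and x^1 are negative,
   all others positive (leading coefficient 1 is positive automatically). *)
Definition sigma_neg (d : nat) (j : nat) : bool := (j == d.-1) || (j == 1%N).

Definition has_sign_sigma_bullet (R : realType) (d : nat) (a : 'rV[R]_d) : Prop :=
  forall j : 'I_d, if sigma_neg d j then coefj a j < 0 else 0 < coefj a j.

Definition nroots_in (R : realType) (p : {poly R}) (P : R -> bool) (n : nat) : Prop :=
  exists s : seq R, [/\ uniq s, size s = n & forall x, (x \in s) = (P x && root p x)].

Definition cconj (R : realType) (z : R[i]) : R[i] := @Complex R (@complex.Re R z) (- @complex.Im R z).

Definition to_C (R : realType) (x : R) : R[i] := @Complex R x 0.

Definition one_nonreal_pair (R : realType) (p : {poly R}) : Prop :=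
  let pc := map_poly (@to_C R) p in
  exists z : R[i], [/\ @complex.Im R z != 0, root pc z, ~~ root pc^`() z &
    forall w : R[i], @complex.Im R w != 0 -> root pc w -> w = z \/ w = cconj z].

Definition A_sigma (R : realType) (d pos neg : nat) : set 'rV[R]_d :=
  [set a | [/\ has_sign_sigma_bullet a,
              nroots_in (Qpoly a) (fun x => 0 < x) pos,
              nroots_in (Qpoly a) (fun x => x < 0) neg,
              (forall x : R, root (Qpoly a) x -> ~~ root (Qpoly a)^`() x) &
              one_nonreal_pair (Qpoly a)]].

(* Main.v *)
Require Import Defs.
From HB Require Import structures.
From mathcomp Require Import all_boot all_order all_algebra.
From mathcomp Require Import all_classical all_reals all_analysis.
From mathcomp Require Import matrix_topology matrix_normedtype.
From mathcomp Require Import complex.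
From mathcomp Require Import ring lra.
Import numFieldTopology.Exports.
Import Order.TTheory GRing.Theory Num.Theory.
Local Open Scope ring_scope.
Local Open Scope classical_set_scope.
Section Top.
Variables (R : realType) (n : nat).
Local Notation V := 'rV[R]_n.

Definition segm (a b : V) : set V := [set a + t *: (b - a) | t in `[0, 1]%classic].

Lemma segm_connected a b : connected (segm a b).
Proof.
apply: connected_continuous_connected; first exact: segment_connected.
apply: continuous_subspaceT => t.
apply: (@continuousD _ _ _ (fun=> a) (fun t : R => t *: (b - a))).
  exact: cst_continuous.
by apply: continuousZr_tmp.
Qed.

Definition linked (A : set V) (x y : V) :=
  exists C : set V, [/\ C `<=` A, connected C, C x & C y].

Lemma linked_seg (A : set V) a b :
  (forall t : R, 0 <= t <= 1 -> A (a + t *: (b - a))) -> linked A a b.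
Proof.
move=> H; exists (segm a b); split.
- by move=> _ [t /= t01 <-]; apply: H; rewrite in_itv /= in t01.
- exact: segm_connected.
- by exists 0; [rewrite /= in_itv /= ler01 lexx| rewrite scale0r addr0].
- by exists 1; [rewrite /= in_itv /= ler01 lexx| rewrite scale1r addrC subrK].
Qed.

Lemma linked_trans A x y z : linked A x y -> linked A y z -> linked A x z.
Proof.
move=> [C [CA cC Cx Cy]] [D [DA cD Dy Dz]]; exists (C `|` D); split.
- by move=> p [/CA|/DA].
- by apply: connectedU => //; exists y.
- by left.
- by right.
Qed.

Lemma connected_of_linked (A : set V) base :
  A base -> (forall a, A a -> linked A a base) -> connected A.
Proof.
move=> Ab H.
have -> : A = \bigcup_(C in [set C : set V | [/\ C `<=` A, connected C & C base]]) C.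
  apply/seteqP; split.
  - by move=> a /H [C [CA cC Ca Cb]]; exists C.
  - by move=> a [C [CA _ _] /CA].
apply: bigcup_connected.
- by exists base => C [].
- by move=> C [].
Qed.
End Top.
Arguments segm {R n}.
Arguments linked {R n}.
Arguments linked_seg {R n}.
Arguments linked_trans {R n}.
Arguments connected_of_linked {R n}.
Lemma deriv_root (K : comNzRingType) (F H : {poly K}) x :
  F = ('X - x%:P) * H -> (F^`()).[x] = H.[x].
Proof.
move=> ->; rewrite derivM derivXsubC !hornerE subrr; ring.
Qed.

Section Alg.
Variable R : realType.
Implicit Types (b c x : R) (rs : seq R).

Definition qp b c : {poly R} := 'X^2 + b%:P * 'X + c%:P.
Definition Qp rs b c : {poly R} := (\prod_(r <- rs) ('X - r%:P)) * qp b c.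

Lemma horner_qp b c x : (qp b c).[x] = x ^+ 2 + b * x + c.
Proof. by rewrite /qp !hornerD hornerXn hornerCM hornerX hornerC. Qed.

Lemma qp_pos b c x : b ^+ 2 < 4%:R * c -> 0 < (qp b c).[x].
Proof.
move=> H; rewrite /qp !hornerE.
have h : 0 <= (2%:R * x + b) ^+ 2 by apply: sqr_ge0.
nra.
Qed.

Lemma root_Qp rs b c x : b ^+ 2 < 4%:R * c -> root (Qp rs b c) x = (x \in rs).
Proof.
move=> H; rewrite /Qp rootM root_prod_XsubC /root.
by rewrite (gt_eqF (@qp_pos b c x H)) orbF.
Qed.


Lemma simple_Qp rs b c x : b ^+ 2 < 4%:R * c -> uniq rs -> x \in rs ->
  ~~ root (Qp rs b c)^`() x.
Proof.
move=> H urs xrs.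
rewrite /root (@deriv_root _ _ ((\prod_(r <- rem x rs) ('X - r%:P)) * qp b c) x).
  rewrite hornerM mulf_neq0 ?(gt_eqF (@qp_pos b c x H)) // horner_prod.
  rewrite prodf_seq_neq0; apply/allP => y yin /=; rewrite hornerXsubC subr_eq0.
  apply/eqP => exy; move: yin; rewrite -exy.
  by rewrite mem_rem_uniqF.
by rewrite /Qp (big_rem _ xrs) /= mulrA.
Qed.
End Alg.
Arguments qp {R}.
Arguments Qp {R}.
Section Cplx.
Variable R : realType.
Implicit Types (b c x : R) (rs : seq R).
Local Open Scope complex_scope.

Lemma to_CE : @to_C R =1 real_complex R.
Proof. by []. Qed.

Lemma map_Qp rs b c z0 :
  z0 + z0^* = - (b%:C) -> z0 * z0^* = c%:C ->
  map_poly (@to_C R) (Qp rs b c) =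
  (\prod_(r <- rs) ('X - (r%:C)%:P)) * (('X - z0%:P) * ('X - (z0^*)%:P)).
Proof.
move=> hs hp.
rewrite (eq_map_poly to_CE) /Qp rmorphM /= map_prod_XsubC; congr (_ * _).
rewrite /qp rmorphD rmorphD /= rmorphM /= rmorphM /= map_polyX !map_polyC /=.
have -> : b%:C = - (z0 + z0^*) by rewrite hs opprK.
rewrite -hp polyCN polyCD polyCM; ring.
Qed.

Lemma one_pair_Qp rs b c : b ^+ 2 < 4%:R * c -> one_nonreal_pair (Qp rs b c).
Proof.
move=> H.
set y := Num.sqrt (4%:R * c - b ^+ 2) / 2%:R.
have y0 : 0 < y by rewrite divr_gt0 // sqrtr_gt0 subr_gt0.
have y2 : y ^+ 2 = c - b ^+ 2 / 4%:R.
  by rewrite /y expr_div_n sqr_sqrtr ?subr_ge0 ?ltW //; field.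
pose z0 : R[i] := (- b / 2%:R) +i* y.
have hs : z0 + z0^* = - (b%:C).
  by rewrite /z0; simpc; apply/eqP; rewrite eq_complex /= eqxx andbT; apply/eqP; field.
have hp : z0 * z0^* = c%:C.
  rewrite /z0; simpc; apply/eqP; rewrite eq_complex /=; apply/andP; split; apply/eqP.
    by rewrite -[y * y]expr2 y2; field.
  ring.
rewrite /one_nonreal_pair (@map_Qp rs b c z0 hs hp).
have Imz0 : complex.Im z0 != 0 by rewrite /= gt_eqF.
exists z0; split => //.
- by rewrite rootM; apply/orP; right; rewrite rootM root_XsubC eqxx.
- rewrite /root (@deriv_root _ _ ((\prod_(r <- rs) ('X - (r%:C)%:P)) * ('X - (z0^*)%:P)) z0).
    rewrite hornerM mulf_neq0 //.
      rewrite horner_prod prodf_seq_neq0; apply/allP => r _ /=.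
      rewrite hornerXsubC; apply/eqP => /(congr1 (@complex.Im R)).
      by rewrite /z0 /=; simpc => /= y00; move: y0; rewrite y00 ltxx.
    rewrite hornerXsubC; apply/eqP => /(congr1 (@complex.Im R)).
    by rewrite /z0 /=; simpc => /= h; lra.
  rewrite mulrCA; congr (_ * _); by rewrite mulrC.
- move=> w Imw; rewrite rootM -(big_map (real_complex R) xpredT (fun a : R[i] => 'X - a%:P)) root_prod_XsubC => /orP[/mapP|].
  + by move=> [r _ wr]; move: Imw; rewrite wr /= eqxx.
  + rewrite rootM !root_XsubC => /orP[/eqP->|/eqP->]; [by left|by right].
Qed.
End Cplx.
Section Rows.
Variable R : realType.
Definition ent {n} (a : 'rV[R]_n.+1) (i : nat) := a ord0 (inord i).

Ltac ordfix := apply/val_inj; rewrite /= inordK.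

Lemma rev_inord n i : (i <= n)%N -> rev_ord (inord i : 'I_n.+1) = inord (n - i).
Proof. by move=> h; apply/val_inj; rewrite /= !inordK // ?subSS // ltnS leq_subr. Qed.

Lemma Qpoly4 (a : 'rV[R]_4) : Qpoly a =
  'X^4 + (ent a 0)%:P * 'X^3 + (ent a 1)%:P * 'X^2 + (ent a 2)%:P * 'X + (ent a 3)%:P.
Proof.
rewrite /Qpoly !big_ord_recr big_ord0 /= /coefj /ent /=.
have -> : rev_ord ord_max = inord 0 :> 'I_4 by ordfix.
have -> : rev_ord (widen_ord (m:=4) (leqnSn 3) ord_max) = inord 1 :> 'I_4 by ordfix.
have -> : rev_ord (widen_ord (m:=4) (leqnSn 3) (widen_ord (m:=3) (leqnSn 2) ord_max)) = inord 2 :> 'I_4 by ordfix.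
have -> : rev_ord (widen_ord (m:=4) (leqnSn 3) (widen_ord (m:=3) (leqnSn 2) (widen_ord (m:=2) (leqnSn 1) ord_max))) = inord 3 :> 'I_4 by ordfix.
rewrite expr0 expr1; ring.
Qed.

Lemma Qpoly5 (a : 'rV[R]_5) : Qpoly a =
  'X^5 + (ent a 0)%:P * 'X^4 + (ent a 1)%:P * 'X^3 + (ent a 2)%:P * 'X^2 + (ent a 3)%:P * 'X + (ent a 4)%:P.
Proof.
rewrite /Qpoly !big_ord_recr big_ord0 /= /coefj /ent /=.
have -> : rev_ord ord_max = inord 0 :> 'I_5 by ordfix.
have -> : rev_ord (widen_ord (m:=5) (leqnSn 4) ord_max) = inord 1 :> 'I_5 by ordfix.
have -> : rev_ord (widen_ord (m:=5) (leqnSn 4) (widen_ord (m:=4) (leqnSn 3) ord_max)) = inord 2 :> 'I_5 by ordfix.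
have -> : rev_ord (widen_ord (m:=5) (leqnSn 4) (widen_ord (m:=4) (leqnSn 3) (widen_ord (m:=3) (leqnSn 2) ord_max))) = inord 3 :> 'I_5 by ordfix.
have -> : rev_ord (widen_ord (m:=5) (leqnSn 4) (widen_ord (m:=4) (leqnSn 3) (widen_ord (m:=3) (leqnSn 2) (widen_ord (m:=2) (leqnSn 1) ord_max)))) = inord 4 :> 'I_5 by ordfix.
rewrite expr0 expr1; ring.
Qed.

Lemma sign4 (a : 'rV[R]_4) : has_sign_sigma_bullet a <->
  [/\ ent a 0 < 0, 0 < ent a 1, ent a 2 < 0 & 0 < ent a 3].
Proof.
rewrite /has_sign_sigma_bullet /coefj /ent; split.
- move=> H; split.
  + by have := H (inord 3); rewrite /sigma_neg inordK //= rev_inord.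
  + by have := H (inord 2); rewrite /sigma_neg inordK //= rev_inord.
  + by have := H (inord 1); rewrite /sigma_neg inordK //= rev_inord.
  + by have := H (inord 0); rewrite /sigma_neg inordK //= rev_inord.
- move=> [h0 h1 h2 h3] [[|[|[|[|j]]]] jlt] //=; rewrite /sigma_neg /=.
  + by move: h3; congr (0 < a _ _); ordfix.
  + by move: h2; congr (a _ _ < 0); ordfix.
  + by move: h1; congr (0 < a _ _); ordfix.
  + by move: h0; congr (a _ _ < 0); ordfix.
Qed.

Lemma sign5 (a : 'rV[R]_5) : has_sign_sigma_bullet a <->
  [/\ ent a 0 < 0, 0 < ent a 1, 0 < ent a 2, ent a 3 < 0 & 0 < ent a 4].
Proof.
rewrite /has_sign_sigma_bullet /coefj /ent; split.
- move=> H; split.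
  + by have := H (inord 4); rewrite /sigma_neg inordK //= rev_inord.
  + by have := H (inord 3); rewrite /sigma_neg inordK //= rev_inord.
  + by have := H (inord 2); rewrite /sigma_neg inordK //= rev_inord.
  + by have := H (inord 1); rewrite /sigma_neg inordK //= rev_inord.
  + by have := H (inord 0); rewrite /sigma_neg inordK //= rev_inord.
- move=> [h0 h1 h2 h3 h4] [[|[|[|[|[|j]]]]] jlt] //=; rewrite /sigma_neg /=.
  + by move: h4; congr (0 < a _ _); ordfix.
  + by move: h3; congr (a _ _ < 0); ordfix.
  + by move: h2; congr (0 < a _ _); ordfix.
  + by move: h1; congr (0 < a _ _); ordfix.
  + by move: h0; congr (a _ _ < 0); ordfix.
Qed.
End Rows.
Arguments ent {R n}.
Section Mem.
Variable R : realType.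
Implicit Types (b c x : R) (rs : seq R).

Lemma nroots_Qp rs b c (P : R -> bool) : b ^+ 2 < 4%:R * c -> uniq rs ->
  nroots_in (Qp rs b c) P (count P rs).
Proof.
move=> H u; exists [seq x <- rs | P x]; split.
- exact: filter_uniq.
- by rewrite size_filter.
- by move=> x; rewrite mem_filter root_Qp.
Qed.

Lemma memA d (a : 'rV[R]_d) pos neg rs b c :
  has_sign_sigma_bullet a -> Qpoly a = Qp rs b c -> b ^+ 2 < 4%:R * c -> uniq rs ->
  count (fun x => 0 < x) rs = pos -> count (fun x => x < 0) rs = neg ->
  @A_sigma R d pos neg a.
Proof.
move=> hs hQ H u hp hn; split => //; rewrite hQ.
- by rewrite -hp; apply: nroots_Qp.
- by rewrite -hn; apply: nroots_Qp.
- by move=> x; rewrite root_Qp // => xin; apply: simple_Qp.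
- exact: one_pair_Qp.
Qed.

Lemma quad_form (q : {poly R}) : size q = 3%N -> lead_coef q = 1 ->
  q = qp q`_1 q`_0.
Proof.
move=> sq lq; apply/polyP => i; rewrite /qp !coefD coefXn coefCM coefX coefC.
move: lq; rewrite lead_coefE sq /= => lq.
case: i => [|[|[|i]]] /=; rewrite ?mulr0 ?mulr1 ?add0r ?addr0 //.
by rewrite nth_default // sq.
Qed.

Lemma decomp (Q : {poly R}) rs : Q \is monic -> size Q = (size rs).+3 -> uniq rs ->
  all (root Q) rs -> (forall x, root Q x -> x \in rs) ->
  (forall x, root Q x -> ~~ root Q^`() x) ->
  exists b c, b ^+ 2 < 4%:R * c /\ Q = Qp rs b c.
Proof.
move=> mQ sQ urs rQ allr simp.
have [q Qe] := uniq_roots_prod_XsubC rQ (etrans (uniq_rootsE rs) urs).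
set D := \prod_(z <- rs) ('X - z%:P) in Qe.
have mD : D \is monic by apply: monic_prod_XsubC.
have sD : size D = (size rs).+1 by rewrite size_prod_XsubC.
have q0 : q != 0 by apply: contraTneq mQ => q0; rewrite Qe q0 mul0r monicE lead_coef0 eq_sym oner_eq0.
have sq : size q = 3%N.
  move: sQ; rewrite Qe size_mul // ?monic_neq0 // sD addnS /=.
  by move=> /eqP; rewrite -(addn3 (size rs)) addnC eqn_add2l => /eqP.
have lq : lead_coef q = 1.
  by move: mQ; rewrite Qe monicE lead_coef_Mmonic // => /eqP.
set b := q`_1; set c := q`_0.
have qe : q = qp b c by exact: quad_form.
exists b, c; split; last by rewrite Qe qe /Qp mulrC.
rewrite ltNge; apply/negP => hd.
set r := (- b + Num.sqrt (b ^+ 2 - 4%:R * c)) / 2%:R.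
have hsq : Num.sqrt (b ^+ 2 - 4%:R * c) ^+ 2 = b ^+ 2 - 4%:R * c by rewrite sqr_sqrtr // subr_ge0.
have qr : q.[r] = 0.
  rewrite qe horner_qp /r; move: hsq; set t := Num.sqrt _ => hsq.
  transitivity ((t ^+ 2 - (b ^+ 2 - 4%:R * c)) / 4%:R); first by field.
  by rewrite hsq subrr mul0r.
have rQ' : root Q r by rewrite /root Qe hornerM qr mul0r.
have rin := allr r rQ'.
have Dr : D.[r] = 0 by apply/eqP; rewrite -/(root D r) root_prod_XsubC.
move: (simp r rQ'); rewrite /root Qe derivM !hornerE qr Dr !mulr0 mul0r addr0 eqxx.
by [].
Qed.
End Mem.
Section D5.
Variable R : realType.
Local Notation A5 := (@A_sigma R 5 2 1).
Local Notation A4 := (@A_sigma R 4 2 0).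

Lemma conv_lt0 (x y t : R) : x < 0 -> y < 0 -> 0 <= t <= 1 -> x + t * (y - x) < 0.
Proof. move=> hx hy /andP[t0 t1]; nra. Qed.

Lemma conv_gt0 (x y t : R) : 0 < x -> 0 < y -> 0 <= t <= 1 -> 0 < x + t * (y - x).
Proof. move=> hx hy /andP[t0 t1]; nra. Qed.

Lemma disc_conv (b c b' c' t : R) : b ^+ 2 < 4%:R * c -> b' ^+ 2 < 4%:R * c' -> 0 <= t <= 1 ->
  (b + t * (b' - b)) ^+ 2 < 4%:R * (c + t * (c' - c)).
Proof.
move=> h h' ht; have /andP[t0 t1] := ht.
have hc := @conv_gt0 (4%:R * c - b ^+ 2) (4%:R * c' - b' ^+ 2) t.
rewrite !subr_gt0 in hc; have {hc} hc := hc h h' ht.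
have e : (b + t * (b' - b)) ^+ 2 = (1 - t) * b ^+ 2 + t * b' ^+ 2 - t * (1 - t) * (b - b') ^+ 2.
  by ring.
rewrite e.
have h1 : 0 <= t * (1 - t) * (b - b') ^+ 2 by rewrite mulr_ge0 ?sqr_ge0 // mulr_ge0 // subr_ge0.
lra.
Qed.

Lemma cube_root (W : R) : 0 < W -> exists2 w : R, 0 < w & w ^+ 3 = W.
Proof.
move=> W0.
have hab : 0 <= W + 1 by rewrite addr_ge0 // ltW.
have hp : ('X^3 - W%:P).[0] <= 0 <= ('X^3 - W%:P).[W + 1].
  rewrite !hornerE expr0n /= sub0r oppr_le0 (ltW W0) /=.
  have h : 1 <= W + 1 by rewrite lerDr ltW.
  rewrite subr_ge0; nra.
have [w /andP[w0 _] rw] := @poly_ivt R ('X^3 - W%:P) 0 (W + 1) hab hp.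
move: rw; rewrite /root !hornerE subr_eq0 => /eqP w3.
exists w => //; rewrite lt_neqAle w0 andbT; apply/eqP => w00.
by move: W0; rewrite -w3 -w00 expr0n /= ltxx.
Qed.

Lemma ent_lin n (a b : 'rV[R]_n.+1) t k :
  ent (a + t *: (b - a)) k = ent a k + t * (ent b k - ent a k).
Proof. by rewrite /ent !mxE. Qed.

Lemma Qp_lin (rs : seq R) (b c b' c' t : R) :
  Qp rs b c + t%:P * (Qp rs b' c' - Qp rs b c) = Qp rs (b + t * (b' - b)) (c + t * (c' - c)).
Proof.
rewrite /Qp /qp; set D := \prod_(_ <- _) _.
rewrite !polyCD !polyCM !polyCB; ring.
Qed.

Lemma Qpoly_monic d (a : 'rV[R]_d) : Qpoly a \is monic /\ size (Qpoly a) = d.+1.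
Proof.
have hs : (size ((\sum_(j < d) (coefj a j)%:P * 'X^j)%R : {poly R}) < size ('X^d : {poly R}))%N.
  rewrite size_polyXn ltnS; apply/leq_sizeP => i hi; rewrite coef_sum.
  apply: big1 => j _; rewrite coefCM coefXn.
  by rewrite (gtn_eqF (leq_trans (ltn_ord j) hi)) mulr0.
rewrite /Qpoly; split.
  by rewrite monicE lead_coefDl // lead_coefXn.
by rewrite size_addl // size_polyXn.
Qed.

Definition row5 (x0 x1 x2 x3 x4 : R) : 'rV[R]_5 :=
  \row_(i < 5) nth 0 [:: x0; x1; x2; x3; x4] i.

Lemma ent_row5 x0 x1 x2 x3 x4 k : (k < 5)%N ->
  ent (row5 x0 x1 x2 x3 x4) k = nth 0 [:: x0; x1; x2; x3; x4] k.
Proof. by move=> hk; rewrite /ent mxE inordK. Qed.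

Lemma row5_lin x0 x1 x2 x3 x4 y0 y1 y2 y3 y4 t :
  row5 x0 x1 x2 x3 x4 + t *: (row5 y0 y1 y2 y3 y4 - row5 x0 x1 x2 x3 x4) =
  row5 (x0 + t * (y0 - x0)) (x1 + t * (y1 - x1)) (x2 + t * (y2 - x2))
       (x3 + t * (y3 - x3)) (x4 + t * (y4 - x4)).
Proof.
apply/rowP => i; rewrite !mxE.
by case: i => [[|[|[|[|[|i]]]]] hi].
Qed.

Lemma Qpoly5_lin (a p : 'rV[R]_5) t :
  Qpoly (a + t *: (p - a)) = Qpoly a + t%:P * (Qpoly p - Qpoly a).
Proof.
rewrite !Qpoly5 !ent_lin !polyCD !polyCM !polyCB; ring.
Qed.

Lemma sign5_lin (a p : 'rV[R]_5) t : has_sign_sigma_bullet a -> has_sign_sigma_bullet p ->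
  0 <= t <= 1 -> has_sign_sigma_bullet (a + t *: (p - a)).
Proof.
move=> /sign5[a0 a1 a2 a3 a4] /sign5[p0 p1 p2 p3 p4] ht; apply/sign5.
by rewrite !ent_lin; split; [apply: conv_lt0|apply: conv_gt0|apply: conv_gt0|apply: conv_lt0|apply: conv_gt0].
Qed.

Definition F5 (s P W : R) := row5 (- s) P W (- (s * W)) (P * W).

Lemma Qpoly_F5 s P W : Qpoly (F5 s P W) = ('X^2 - s%:P * 'X + P%:P) * ('X^3 + W%:P).
Proof.
rewrite Qpoly5 /F5 !ent_row5 //= !polyCN polyCM; ring.
Qed.

Lemma sign_F5 s P W : 0 < s -> 0 < P -> 0 < W -> has_sign_sigma_bullet (F5 s P W).
Proof.
move=> s0 P0 W0; apply/sign5; rewrite /F5 !ent_row5 //=.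
split => //; rewrite ?oppr_lt0 ?mulr_gt0 //.
Qed.

Lemma uniq3 (x1 x2 x3 : R) : x1 != x2 -> 0 < x1 -> 0 < x2 -> x3 < 0 -> uniq [:: x1; x2; x3].
Proof.
move=> h12 h1 h2 h3; rewrite /= !inE negb_or h12 /= !andbT.
by rewrite (gt_eqF (lt_trans h3 h1)) (gt_eqF (lt_trans h3 h2)).
Qed.

Lemma count3p (x1 x2 x3 : R) : 0 < x1 -> 0 < x2 -> x3 < 0 ->
  count (fun x => 0 < x) [:: x1; x2; x3] = 2%N.
Proof. by move=> h1 h2 h3 /=; rewrite h1 h2 ltNge (ltW h3). Qed.

Lemma count3n (x1 x2 x3 : R) : 0 < x1 -> 0 < x2 -> x3 < 0 ->
  count (fun x => x < 0) [:: x1; x2; x3] = 1%N.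
Proof. by move=> h1 h2 h3 /=; rewrite h3 !ltNge (ltW h1) (ltW h2). Qed.

Lemma F5_Qp (x1 x2 w : R) :
  Qpoly (F5 (x1 + x2) (x1 * x2) (w ^+ 3)) = Qp [:: x1; x2; - w] (- w) (w ^+ 2).
Proof.
rewrite Qpoly_F5 /Qp /qp !big_cons big_nil !polyCN polyCD polyCM !rmorphXn; ring.
Qed.

Lemma roots_of_sP (s P : R) : 0 < s -> 0 < P -> 4%:R * P < s ^+ 2 ->
  exists x1 x2 : R, [/\ 0 < x1, 0 < x2, x1 != x2, s = x1 + x2 & P = x1 * x2].
Proof.
move=> s0 P0 hsP.
set t := Num.sqrt (s ^+ 2 - 4%:R * P).
have t2 : t ^+ 2 = s ^+ 2 - 4%:R * P by rewrite sqr_sqrtr // subr_ge0 ltW.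
have t0 : 0 < t by rewrite sqrtr_gt0 subr_gt0.
have ts : t < s by rewrite ltNge; apply/negP => h; nra.
exists ((s - t) / 2%:R), ((s + t) / 2%:R); split.
- by rewrite divr_gt0 // subr_gt0.
- by rewrite divr_gt0 // addr_gt0.
- by apply/negP => /eqP h; lra.
- by field.
- transitivity ((s ^+ 2 - t ^+ 2) / 4%:R); first by rewrite t2; field.
  by field.
Qed.

Lemma F5_mem s P W : 0 < s -> 0 < P -> 4%:R * P < s ^+ 2 -> 0 < W -> A5 (F5 s P W).
Proof.
move=> s0 P0 hsP W0.
have [w w0 w3] := @cube_root W W0.
have [x1 [x2 [h1 h2 h12 es eP]]] := @roots_of_sP s P s0 P0 hsP.
have hw : - w < 0 by rewrite oppr_lt0.
apply: (@memA R 5 _ 2 1 [:: x1; x2; - w] (- w) (w ^+ 2)).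
- exact: sign_F5.
- by rewrite es eP -w3 F5_Qp.
- by rewrite sqrrN; nra.
- exact: uniq3.
- exact: count3p.
- exact: count3n.
Qed.

Lemma link_F5 s P W : 0 < s -> 0 < P -> 4%:R * P < s ^+ 2 -> 0 < W ->
  linked A5 (F5 s P W) (F5 3%:R 2%:R 1).
Proof.
move=> s0 P0 hsP W0.
set S := Num.max s 3%:R.
have sS : s <= S by rewrite le_max lexx.
have S3 : 3%:R <= S by rewrite le_max lexx orbT.
apply: (@linked_trans _ _ _ _ (F5 s P 1)).
  apply: linked_seg => t /andP[t0 t1]; rewrite /F5 row5_lin.
  have -> : row5 (- s + t * (- s - - s)) (P + t * (P - P)) (W + t * (1 - W))
     (- (s * W) + t * (- (s * 1) - - (s * W))) (P * W + t * (P * 1 - P * W)) =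
     F5 s P (W + t * (1 - W)) by rewrite /F5; congr row5; ring.
  apply: F5_mem => //; nra.
apply: (@linked_trans _ _ _ _ (F5 S P 1)).
  apply: linked_seg => t /andP[t0 t1]; rewrite /F5 row5_lin.
  have -> : row5 (- s + t * (- S - - s)) (P + t * (P - P)) (1 + t * (1 - 1))
     (- (s * 1) + t * (- (S * 1) - - (s * 1))) (P * 1 + t * (P * 1 - P * 1)) =
     F5 (s + t * (S - s)) P 1 by rewrite /F5; congr row5; ring.
  have hst : s <= s + t * (S - s) by rewrite lerDl mulr_ge0 // subr_ge0.
  have hst2 : s ^+ 2 <= (s + t * (S - s)) ^+ 2 by rewrite lerXn2r // ?nnegrE ltW // (lt_le_trans s0 hst).
  apply: F5_mem => //; lra.
apply: (@linked_trans _ _ _ _ (F5 S 2%:R 1)).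
  apply: linked_seg => t /andP[t0 t1]; rewrite /F5 row5_lin.
  have -> : row5 (- S + t * (- S - - S)) (P + t * (2%:R - P)) (1 + t * (1 - 1))
     (- (S * 1) + t * (- (S * 1) - - (S * 1))) (P * 1 + t * (2%:R * 1 - P * 1)) =
     F5 S (P + t * (2%:R - P)) 1 by rewrite /F5; congr row5; ring.
  have S0 : 0 < S by apply: lt_le_trans sS.
  have hS2 : s ^+ 2 <= S ^+ 2 by rewrite lerXn2r // ?nnegrE ltW.
  have h9 : 3%:R ^+ 2 <= S ^+ 2 by rewrite lerXn2r // ?nnegrE ?ltW // (lt_le_trans _ S3).
  apply: F5_mem => //; nra.
apply: linked_seg => t /andP[t0 t1]; rewrite /F5 row5_lin.
have -> : row5 (- S + t * (- 3%:R - - S)) (2%:R + t * (2%:R - 2%:R)) (1 + t * (1 - 1))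
   (- (S * 1) + t * (- (3%:R * 1) - - (S * 1))) (2%:R * 1 + t * (2%:R * 1 - 2%:R * 1)) =
   F5 (S + t * (3%:R - S)) 2%:R 1 by rewrite /F5; congr row5; ring.
have hst : 3%:R <= S + t * (3%:R - S) by nra.
have h9 : 3%:R ^+ 2 <= (S + t * (3%:R - S)) ^+ 2 by rewrite lerXn2r // ?nnegrE ?ltW // (lt_le_trans _ hst).
apply: F5_mem => //; lra.
Qed.
End D5.
Arguments F5 {R}.
Arguments row5 {R}.
Section Main5.
Variable R : realType.
Local Notation A5 := (@A_sigma R 5 2 1).

Lemma sq_diff_pos (x1 x2 : R) : x1 != x2 -> 4%:R * (x1 * x2) < (x1 + x2) ^+ 2.
Proof.
move=> h; have : 0 < (x1 - x2) ^+ 2 by rewrite exprn_even_gt0 //= subr_eq0 h.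
move=> hp; nra.
Qed.

Lemma link_a5 (a : 'rV[R]_5) : A5 a -> linked A5 a (F5 3%:R 2%:R 1).
Proof.
move=> Aa; have Aa' := Aa; case: Aa' => hs [s1 [u1 sz1 m1]] [s2 [u2 sz2 m2]] hsimp _.
case: s1 u1 sz1 m1 => [|x1 [|x2 [|? ?]]] //= u1 _ m1.
case: s2 u2 sz2 m2 => [|x3 [|? ?]] //= _ _ m2.
have [h1 r1] : 0 < x1 /\ root (Qpoly a) x1 by move: (m1 x1); rewrite !inE eqxx /= => /esym/andP.
have [h2 r2] : 0 < x2 /\ root (Qpoly a) x2 by move: (m1 x2); rewrite !inE eqxx orbT /= => /esym/andP.
have [h3 r3] : x3 < 0 /\ root (Qpoly a) x3 by move: (m2 x3); rewrite !inE eqxx /= => /esym/andP.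
have h12 : x1 != x2 by move: u1; rewrite /= inE andbT.
have Q0 : ~~ root (Qpoly a) 0.
  move: hs => /sign5[_ _ _ _ a4].
  by rewrite /root Qpoly5 !hornerE expr0n /= !mulr0 !add0r gt_eqF.
have [b [c [hbc Qe]]] : exists b c, b ^+ 2 < 4%:R * c /\ Qpoly a = Qp [:: x1; x2; x3] b c.
  apply: (@decomp R (Qpoly a) [:: x1; x2; x3]).
  - exact: (@Qpoly_monic R 5 a).1.
  - exact: (@Qpoly_monic R 5 a).2.
  - exact: uniq3.
  - by rewrite /= r1 r2 r3.
  - move=> x rx; case: (ltgtP x 0) => [xn|xp|x0].
    + have : x \in [:: x3] by rewrite m2 xn rx.
      by rewrite !inE => /eqP ->; rewrite eqxx !orbT.
    + have : x \in [:: x1; x2] by rewrite m1 xp rx.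
      by rewrite !inE => /orP[/eqP ->|/eqP ->]; rewrite eqxx ?orbT.
    + by move: Q0; rewrite -x0 rx.
  - exact: hsimp.
have w0 : 0 < - x3 by rewrite oppr_gt0.
apply: (@linked_trans _ _ _ _ (F5 (x1 + x2) (x1 * x2) ((- x3) ^+ 3))); last first.
  apply: link_F5; rewrite ?addr_gt0 ?mulr_gt0 ?exprn_gt0 //.
  exact: sq_diff_pos.
apply: linked_seg => t ht.
apply: (@memA R 5 _ 2 1 [:: x1; x2; x3] (b + t * (- - x3 - b)) (c + t * ((- x3) ^+ 2 - c))).
- apply: sign5_lin => //; apply: sign_F5; rewrite ?addr_gt0 ?mulr_gt0 ?exprn_gt0 //.
- rewrite Qpoly5_lin Qe F5_Qp (_ : - - x3 = x3) ?opprK // Qp_lin.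
  by [].
- apply: disc_conv => //; rewrite sqrrN; nra.
- exact: uniq3.
- exact: count3p.
- exact: count3n.
Qed.

Lemma connected_A5 : connected A5.
Proof.
apply: (connected_of_linked _ (F5 3%:R 2%:R 1)); last exact: link_a5.
apply: F5_mem; rewrite ?ltr0n //; rewrite -natrX -natrM ltr_nat //.
Qed.
End Main5.
Section D4.
Variable R : realType.
Local Notation A4 := (@A_sigma R 4 2 0).

Definition row4 (x0 x1 x2 x3 : R) : 'rV[R]_4 :=
  \row_(i < 4) nth 0 [:: x0; x1; x2; x3] i.

Lemma ent_row4 x0 x1 x2 x3 k : (k < 4)%N ->
  ent (row4 x0 x1 x2 x3) k = nth 0 [:: x0; x1; x2; x3] k.
Proof. by move=> hk; rewrite /ent mxE inordK. Qed.

Lemma row4_lin x0 x1 x2 x3 y0 y1 y2 y3 t :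
  row4 x0 x1 x2 x3 + t *: (row4 y0 y1 y2 y3 - row4 x0 x1 x2 x3) =
  row4 (x0 + t * (y0 - x0)) (x1 + t * (y1 - x1)) (x2 + t * (y2 - x2))
       (x3 + t * (y3 - x3)).
Proof.
apply/rowP => i; rewrite !mxE.
by case: i => [[|[|[|[|i]]]] hi].
Qed.

Lemma Qpoly4_lin (a p : 'rV[R]_4) t :
  Qpoly (a + t *: (p - a)) = Qpoly a + t%:P * (Qpoly p - Qpoly a).
Proof.
rewrite !Qpoly4 !ent_lin !polyCD !polyCM !polyCB; ring.
Qed.

Lemma sign4_lin (a p : 'rV[R]_4) t : has_sign_sigma_bullet a -> has_sign_sigma_bullet p ->
  0 <= t <= 1 -> has_sign_sigma_bullet (a + t *: (p - a)).
Proof.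
move=> /sign4[a0 a1 a2 a3] /sign4[p0 p1 p2 p3] ht; apply/sign4.
by rewrite !ent_lin; split; [apply: conv_lt0|apply: conv_gt0|apply: conv_lt0|apply: conv_gt0].
Qed.

Definition F4 (s P C : R) := row4 (- s) (P + C) (- (s * C)) (P * C).

Lemma sign_F4 s P C : 0 < s -> 0 < P -> 0 < C -> has_sign_sigma_bullet (F4 s P C).
Proof.
move=> s0 P0 C0; apply/sign4; rewrite /F4 !ent_row4 //=.
split => //; rewrite ?oppr_lt0 ?mulr_gt0 ?addr_gt0 //.
Qed.

Lemma uniq2 (x1 x2 : R) : x1 != x2 -> uniq [:: x1; x2].
Proof. by move=> h; rewrite /= inE h. Qed.

Lemma count2p (x1 x2 : R) : 0 < x1 -> 0 < x2 -> count (fun x => 0 < x) [:: x1; x2] = 2%N.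
Proof. by move=> h1 h2 /=; rewrite h1 h2. Qed.

Lemma count2n (x1 x2 : R) : 0 < x1 -> 0 < x2 -> count (fun x => x < 0) [:: x1; x2] = 0%N.
Proof. by move=> h1 h2 /=; rewrite !ltNge (ltW h1) (ltW h2). Qed.

Lemma F4_Qp (x1 x2 C : R) :
  Qpoly (F4 (x1 + x2) (x1 * x2) C) = Qp [:: x1; x2] 0 C.
Proof.
rewrite Qpoly4 /F4 !ent_row4 //= /Qp /qp !big_cons big_nil !polyCN !polyCD !polyCM; ring.
Qed.

Lemma F4_mem s P C : 0 < s -> 0 < P -> 4%:R * P < s ^+ 2 -> 0 < C -> A4 (F4 s P C).
Proof.
move=> s0 P0 hsP C0.
have [x1 [x2 [h1 h2 h12 es eP]]] := @roots_of_sP R s P s0 P0 hsP.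
apply: (@memA R 4 _ 2 0 [:: x1; x2] 0 C).
- exact: sign_F4.
- by rewrite es eP F4_Qp.
- by rewrite expr0n /= mulr_gt0.
- exact: uniq2.
- exact: count2p.
- exact: count2n.
Qed.

Lemma link_F4 s P C : 0 < s -> 0 < P -> 4%:R * P < s ^+ 2 -> 0 < C ->
  linked A4 (F4 s P C) (F4 3%:R 2%:R 1).
Proof.
move=> s0 P0 hsP C0.
set S := Num.max s 3%:R.
have sS : s <= S by rewrite le_max lexx.
have S3 : 3%:R <= S by rewrite le_max lexx orbT.
apply: (@linked_trans _ _ _ _ (F4 s P 1)).
  apply: linked_seg => t /andP[t0 t1]; rewrite /F4 row4_lin.
  have -> : row4 (- s + t * (- s - - s)) (P + C + t * (P + 1 - (P + C)))
     (- (s * C) + t * (- (s * 1) - - (s * C))) (P * C + t * (P * 1 - P * C)) =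
     F4 s P (C + t * (1 - C)) by rewrite /F4; congr row4; ring.
  apply: F4_mem => //; nra.
apply: (@linked_trans _ _ _ _ (F4 S P 1)).
  apply: linked_seg => t /andP[t0 t1]; rewrite /F4 row4_lin.
  have -> : row4 (- s + t * (- S - - s)) (P + 1 + t * (P + 1 - (P + 1)))
     (- (s * 1) + t * (- (S * 1) - - (s * 1))) (P * 1 + t * (P * 1 - P * 1)) =
     F4 (s + t * (S - s)) P 1 by rewrite /F4; congr row4; ring.
  have hst : s <= s + t * (S - s) by rewrite lerDl mulr_ge0 // subr_ge0.
  have hst2 : s ^+ 2 <= (s + t * (S - s)) ^+ 2 by rewrite lerXn2r // ?nnegrE ltW // (lt_le_trans s0 hst).
  apply: F4_mem => //; lra.
apply: (@linked_trans _ _ _ _ (F4 S 2%:R 1)).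
  apply: linked_seg => t /andP[t0 t1]; rewrite /F4 row4_lin.
  have -> : row4 (- S + t * (- S - - S)) (P + 1 + t * (2%:R + 1 - (P + 1)))
     (- (S * 1) + t * (- (S * 1) - - (S * 1))) (P * 1 + t * (2%:R * 1 - P * 1)) =
     F4 S (P + t * (2%:R - P)) 1 by rewrite /F4; congr row4; ring.
  have S0 : 0 < S by apply: lt_le_trans sS.
  have hS2 : s ^+ 2 <= S ^+ 2 by rewrite lerXn2r // ?nnegrE ltW.
  have h9 : 3%:R ^+ 2 <= S ^+ 2 by rewrite lerXn2r // ?nnegrE ?ltW // (lt_le_trans _ S3).
  apply: F4_mem => //; nra.
apply: linked_seg => t /andP[t0 t1]; rewrite /F4 row4_lin.
have -> : row4 (- S + t * (- 3%:R - - S)) (2%:R + 1 + t * (2%:R + 1 - (2%:R + 1)))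
   (- (S * 1) + t * (- (3%:R * 1) - - (S * 1))) (2%:R * 1 + t * (2%:R * 1 - 2%:R * 1)) =
   F4 (S + t * (3%:R - S)) 2%:R 1 by rewrite /F4; congr row4; ring.
have hst : 3%:R <= S + t * (3%:R - S) by nra.
have h9 : 3%:R ^+ 2 <= (S + t * (3%:R - S)) ^+ 2 by rewrite lerXn2r // ?nnegrE ?ltW // (lt_le_trans _ hst).
apply: F4_mem => //; lra.
Qed.

Lemma link_a4 (a : 'rV[R]_4) : A4 a -> linked A4 a (F4 3%:R 2%:R 1).
Proof.
move=> Aa; have Aa' := Aa; case: Aa' => hs [s1 [u1 sz1 m1]] [s2 [u2 sz2 m2]] hsimp _.
case: s1 u1 sz1 m1 => [|x1 [|x2 [|? ?]]] //= u1 _ m1.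
case: s2 u2 sz2 m2 => [|? ?] //= _ _ m2.
have [h1 r1] : 0 < x1 /\ root (Qpoly a) x1 by move: (m1 x1); rewrite !inE eqxx /= => /esym/andP.
have [h2 r2] : 0 < x2 /\ root (Qpoly a) x2 by move: (m1 x2); rewrite !inE eqxx orbT /= => /esym/andP.
have h12 : x1 != x2 by move: u1; rewrite /= inE andbT.
have Q0 : ~~ root (Qpoly a) 0.
  move: hs => /sign4[_ _ _ a3].
  by rewrite /root Qpoly4 !hornerE expr0n /= !mulr0 !add0r gt_eqF.
have [b [c [hbc Qe]]] : exists b c, b ^+ 2 < 4%:R * c /\ Qpoly a = Qp [:: x1; x2] b c.
  apply: (@decomp R (Qpoly a) [:: x1; x2]).
  - exact: (@Qpoly_monic R 4 a).1.
  - exact: (@Qpoly_monic R 4 a).2.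
  - exact: uniq2.
  - by rewrite /= r1 r2.
  - move=> x rx; case: (ltgtP x 0) => [xn|xp|x0].
    + by have := m2 x; rewrite in_nil xn rx.
    + have : x \in [:: x1; x2] by rewrite m1 xp rx.
      by [].
    + by move: Q0; rewrite -x0 rx.
  - exact: hsimp.
apply: (@linked_trans _ _ _ _ (F4 (x1 + x2) (x1 * x2) 1)); last first.
  apply: link_F4; rewrite ?addr_gt0 ?mulr_gt0 //.
  exact: sq_diff_pos.
apply: linked_seg => t ht.
apply: (@memA R 4 _ 2 0 [:: x1; x2] (b + t * (0 - b)) (c + t * (1 - c))).
- apply: sign4_lin => //; apply: sign_F4; rewrite ?addr_gt0 ?mulr_gt0 //.
- by rewrite Qpoly4_lin Qe F4_Qp Qp_lin.
- by apply: disc_conv => //; rewrite expr0n /= mulr1 ltr0n.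
- exact: uniq2.
- exact: count2p.
- exact: count2n.
Qed.

Lemma connected_A4 : connected A4.
Proof.
apply: (connected_of_linked _ (F4 3%:R 2%:R 1)); last exact: link_a4.
apply: F4_mem; rewrite ?ltr0n //; rewrite -natrX -natrM ltr_nat //.
Qed.
End D4.

Theorem theorem1 (R : realType) :
  connected (@A_sigma R 4 2 0 : set 'rV[R]_4) /\ connected (@A_sigma R 5 2 1 : set 'rV[R]_5).
Proof. split; [exact: connected_A4 | exact: connected_A5]. Qed.
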